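(* Let $X \in \Lambda^2_{14} = \mathfrak{g}_2$. Then there exist a $\mathrm{G}_2$-adapted frame $\mathcal{B} = \{ e_1, \ldots, e_7 \}$ and real numbers $\lambda \geq \mu \geq 0$ such that the matrix $[X]_{\mathcal{B}}$, whose $(i,j)$ entry is $X(e_i,e_j)$, is $$ [X]_{\mathcal{B}} = \begin{pmatrix} \begin{matrix} 0 & - \lambda & 0 \\ \lambda & 0 & 0 \\ 0 & 0 & 0 \end{matrix} & \\ & \begin{matrix} 0 & 0 & 0 & \lambda - \mu \\ 0 & 0 & - \mu & 0 \\ 0 & \mu & 0 & 0 \\ - (\lambda - \mu) & 0 & 0 & 0 \end{matrix} \end{pmatrix}, $$ where all nondisplayed entries are zero. Moreover, exactly three cases occur: (i) if $\lambda = \mu$, then $\lambda = \mu = 0$ and $X = 0$; (ii) if $\lambda > 0$ and $\mu = 0$, then $\operatorname{rank} X = 4$ and $\ker X$ is the associative $3$-plane spanned by $\{ e_3, e_5, e_6 \}$; (iii) if $\lambda > \mu > 0$, then $\operatorname{rank} X = 6$ and $\ker X$ is spanned by $e_3$.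
   Context: Equip $\mathbb{R}^7$ with its standard inner product $\langle \cdot,\cdot\rangle$, standard orientation and standard basis. Let $\varphi = e_{123} - e_{167} - e_{527} - e_{563} - e_{415} - e_{426} - e_{437}$ (where $e_{ijk} = e_i \wedge e_j \wedge e_k$ in the standard basis) and define the cross product $u \times v$ by $\langle u \times v, w \rangle = \varphi(u,v,w)$. A bilinear form $A$ on $\mathbb{R}^7$ is identified with the linear operator $A$ defined by $A(u,v) = \langle A(u), v \rangle$; thus $\Lambda^2 = \Lambda^2(\mathbb{R}^7)$ (skew-symmetric bilinear forms) is identified with $\mathfrak{so}(7)$. The subspace $\Lambda^2_{14} = \mathfrak{g}_2$ is the set of $X \in \Lambda^2$ with $X(v \times w) = X(v) \times w + v \times X(w)$ for all $v,w$ (the Lie algebra of $\mathrm{G}_2$, the stabilizer of $\varphi$ in $\mathrm{GL}(7,\mathbb{R})$). A $\mathrm{G}_2$-adapted frame is an oriented orthonormal basis $\{e_1,\dots,e_7\}$ of $\mathbb{R}^7$ with $e_3 = e_1 \times e_2$, $e_5 = e_1 \times e_4$, $e_6 = e_2 \times e_4$, $e_7 = e_3 \times e_4$. A $3$-dimensional subspace is associative if it is closed under the cross product. *)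

(* Defs.v *)
From HB Require Import structures.
From mathcomp Require Import all_boot all_order all_algebra.
Set Implicit Arguments. Unset Strict Implicit. Unset Printing Implicit Defensive.
Import Order.TTheory GRing.Theory Num.Theory.
Local Open Scope ring_scope.

Section G2.
Variable R : rcfType.

(* Vectors of R^7 are row vectors 'rV[R]_7; coordinate n is 1-based (n = 1..7). *)
Definition coord7 (u : 'rV[R]_7) (n : nat) : R := u 0 (inord n.-1).

Definition dot7 (u v : 'rV[R]_7) : R := \sum_(i < 7) u 0 i * v 0 i.

(* e_{ijk}(u,v,w) = det [[u_i u_j u_k];[v_i v_j v_k];[w_i w_j w_k]] *)
Definition e3form (i j k : nat) (u v w : 'rV[R]_7) : R :=
  let c := coord7 in
  c u i * (c v j * c w k - c v k * c w j)
  - c u j * (c v i * c w k - c v k * c w i)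
  + c u k * (c v i * c w j - c v j * c w i).

Definition phi7 (u v w : 'rV[R]_7) : R :=
  e3form 1 2 3 u v w - e3form 1 6 7 u v w - e3form 5 2 7 u v w
  - e3form 5 6 3 u v w - e3form 4 1 5 u v w - e3form 4 2 6 u v w
  - e3form 4 3 7 u v w.

(* standard basis vector e_k, 0-based index *)
Definition stdb (k : 'I_7) : 'rV[R]_7 := delta_mx 0 k.

(* cross product: <u x v, w> = phi(u,v,w); its k-th coordinate is phi(u,v,e_k) *)
Definition cross7 (u v : 'rV[R]_7) : 'rV[R]_7 := \row_k phi7 u v (stdb k).

(* A bilinear form X on R^7 is represented by the matrix M with
   X(u,v) = u *m M *m v^T, i.e. M i j = X(e_i,e_j); the associated operator
   is X(u) = u *m M, so that X(u,v) = <X(u), v>. *)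
Definition skew7 (M : 'M[R]_7) : Prop := M^T = - M.

Definition in_g2 (M : 'M[R]_7) : Prop :=
  skew7 M /\
  forall v w : 'rV[R]_7,
    cross7 v w *m M = cross7 (v *m M) w + cross7 v (w *m M).

(* frame vectors: the rows of B; fv B n is e_n (1-based) *)
Definition fv (B : 'M[R]_7) (n : nat) : 'rV[R]_7 := row (inord n.-1) B.

Definition G2_adapted (B : 'M[R]_7) : Prop :=
  (forall i j : 'I_7, dot7 (row i B) (row j B) = (i == j)%:R) /\
  0 < \det B /\
  fv B 3 = cross7 (fv B 1) (fv B 2) /\
  fv B 5 = cross7 (fv B 1) (fv B 4) /\
  fv B 6 = cross7 (fv B 2) (fv B 4) /\
  fv B 7 = cross7 (fv B 3) (fv B 4).

Definition mx_in_frame (M B : 'M[R]_7) : 'M[R]_7 := B *m M *m B^T.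

(* the normal form of the theorem (0-based indices) *)
Definition g2_normal_form (l m : R) : 'M[R]_7 :=
  \matrix_(i, j)
    match nat_of_ord i, nat_of_ord j with
    | 0%N, 1%N => - l
    | 1%N, 0%N => l
    | 3%N, 6%N => l - m
    | 6%N, 3%N => - (l - m)
    | 4%N, 5%N => - m
    | 5%N, 4%N => m
    | _, _ => 0
    end.

Definition associative_plane (k : nat) (S : 'M[R]_(k, 7)) : Prop :=
  \rank S = 3%N /\
  forall u v : 'rV[R]_7, (u <= S)%MS -> (v <= S)%MS -> (cross7 u v <= S)%MS.

Definition span356 (B : 'M[R]_7) : 'M[R]_(3, 7) :=
  col_mx (fv B 3) (col_mx (fv B 5) (fv B 6)).

End G2.

(* Main.v *)
Require Import Defs.
From HB Require Import structures.
From mathcomp Require Import all_boot all_order all_algebra.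
From mathcomp Require Import ring lra.
From mathcomp Require Import complex.
From mathcomp Require Import zify.
Import Order.TTheory GRing.Theory Num.Theory.
Local Open Scope ring_scope.
Set Implicit Arguments. Unset Strict Implicit. Unset Printing Implicit Defensive.

Notation i0 := (@Ordinal 7 0 isT).
Notation i1 := (@Ordinal 7 1 isT).
Notation i2 := (@Ordinal 7 2 isT).
Notation i3 := (@Ordinal 7 3 isT).
Notation i4 := (@Ordinal 7 4 isT).
Notation i5 := (@Ordinal 7 5 isT).
Notation i6 := (@Ordinal 7 6 isT).

Section Work.
Variable R : rcfType.
Implicit Types (u v w : 'rV[R]_7) (M N : 'M[R]_7).

Lemma ord7_cases (P : 'I_7 -> Prop) :
  P i0 -> P i1 -> P i2 -> P i3 -> P i4 -> P i5 -> P i6 -> forall k, P k.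
Proof.
move=> H0 H1 H2 H3 H4 H5 H6 [m hm].
by case: m hm => [|[|[|[|[|[|[|//]]]]]]] hm; rewrite (bool_irrelevance hm isT).
Qed.

Lemma vec_ext u w : (forall k, u 0 k = w 0 k) -> u = w.
Proof. by move=> H; apply/rowP. Qed.

Lemma mat_ext M N : (forall i j, M i j = N i j) -> M = N.
Proof. by move=> H; apply/matrixP. Qed.

Lemma sum7 (F : 'I_7 -> R) : \sum_(i < 7) F i =
  F i0 + F i1 + F i2 + F i3 + F i4 + F i5 + F i6.
Proof.
rewrite !big_ord_recr big_ord0 /= add0r.
by repeat congr (_ + _); congr F; apply/val_inj.
Qed.

Lemma mulE u M k : (u *m M) 0 k =
  u 0 i0 * M i0 k + u 0 i1 * M i1 k + u 0 i2 * M i2 k + u 0 i3 * M i3 k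
  + u 0 i4 * M i4 k + u 0 i5 * M i5 k + u 0 i6 * M i6 k.
Proof. by rewrite mxE sum7. Qed.

Lemma mulmE M N i j : (M *m N) i j =
  M i i0 * N i0 j + M i i1 * N i1 j + M i i2 * N i2 j + M i i3 * N i3 j
  + M i i4 * N i4 j + M i i5 * N i5 j + M i i6 * N i6 j.
Proof. by rewrite mxE sum7. Qed.

Ltac mcase := apply: mat_ext;
  apply: ord7_cases; apply: ord7_cases.
Ltac vcase := apply: vec_ext; apply: ord7_cases.

Definition crossf (f : 'I_7 -> R) (g : 'I_7 -> R) (k : nat) : R :=
  match k with
  | 0%N => (f i1 * g i2 - f i2 * g i1) + (f i3 * g i4 - f i4 * g i3) - (f i5 * g i6 - f i6 * g i5)
  | 1%N => - (f i0 * g i2 - f i2 * g i0) + (f i3 * g i5 - f i5 * g i3) + (f i4 * g i6 - f i6 * g i4)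
  | 2%N => (f i0 * g i1 - f i1 * g i0) + (f i3 * g i6 - f i6 * g i3) - (f i4 * g i5 - f i5 * g i4)
  | 3%N => - (f i0 * g i4 - f i4 * g i0) - (f i1 * g i5 - f i5 * g i1) - (f i2 * g i6 - f i6 * g i2)
  | 4%N => (f i0 * g i3 - f i3 * g i0) - (f i1 * g i6 - f i6 * g i1) + (f i2 * g i5 - f i5 * g i2)
  | 5%N => (f i0 * g i6 - f i6 * g i0) + (f i1 * g i3 - f i3 * g i1) - (f i2 * g i4 - f i4 * g i2)
  | _ => - (f i0 * g i5 - f i5 * g i0) + (f i1 * g i4 - f i4 * g i1) + (f i2 * g i3 - f i3 * g i2)
  end.

Lemma inord7 (k : 'I_7) : inord k = k.
Proof. exact: inord_val. Qed.

Lemma inordE n (h : (n < 7)%N) : (inord n : 'I_7) = Ordinal h.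
Proof. by apply/val_inj; rewrite /= inordK. Qed.

Lemma crossE u w (k : 'I_7) : cross7 u w 0 k = crossf (u 0) (w 0) k.
Proof.
rewrite /cross7 /phi7 /e3form /coord7 /stdb mxE /=.
rewrite !(inordE (n := 0) isT) !(inordE (n := 1) isT) !(inordE (n := 2) isT) !(inordE (n := 3) isT)
  !(inordE (n := 4) isT) !(inordE (n := 5) isT) !(inordE (n := 6) isT).
move: k; apply: ord7_cases; rewrite !mxE /= /crossf; ring.
Qed.

Lemma dot7E u w : dot7 u w = u 0 i0 * w 0 i0 + u 0 i1 * w 0 i1 + u 0 i2 * w 0 i2 + u 0 i3 * w 0 i3
  + u 0 i4 * w 0 i4 + u 0 i5 * w 0 i5 + u 0 i6 * w 0 i6.
Proof. by rewrite /dot7 sum7. Qed.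

Definition rotf (i j a b : nat) (sg c s : R) (k l : nat) : R :=
  if k == l then (if (k == i) || (k == j) || (k == a) || (k == b) then c else 1)
  else if (k == i) && (l == j) then s else if (k == j) && (l == i) then - s
  else if (k == a) && (l == b) then sg * s else if (k == b) && (l == a) then - (sg * s)
  else 0.

Definition rot i j a b sg c s : 'M[R]_7 := \matrix_(k, l) rotf i j a b sg c s k l.

Definition G2grp (g : 'M[R]_7) : Prop :=
  g *m g^T = 1%:M /\ \det g = 1 /\
  forall u w, cross7 (u *m g) (w *m g) = cross7 u w *m g.

Lemma det_sq_orth (g h : 'M[R]_7) : g *m g^T = 1%:M -> g = h *m h -> \det g = 1.
Proof.
move=> hg gh.
have h1 : \det g * \det g = 1 by rewrite -{2}det_tr -det_mulmx hg det1.
have h2 : 0 <= \det g by rewrite gh det_mulmx; nra.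
nra.
Qed.

Lemma half_angle (c s : R) : c ^+ 2 + s ^+ 2 = 1 ->
  exists c' s', c = c' ^+ 2 - s' ^+ 2 /\ s = 2 * c' * s'.
Proof.
move=> h.
have [hc|hc] := eqVneq c (-1).
  exists 0, 1; split; first by rewrite hc; ring.
  have : s ^+ 2 = 0 by rewrite hc in h; lra.
  by move/eqP; rewrite sqrf_eq0 => /eqP ->; ring.
have hc1 : 0 < 1 + c.
  have : c >= -1 by nra.
  by rewrite le_eqVlt eq_sym (negbTE hc) /=; lra.
set c' := Num.sqrt ((1 + c) / 2).
have hc'2 : c' ^+ 2 = (1 + c) / 2 by rewrite sqr_sqrtr //; apply: divr_ge0; lra.
have hc'0 : c' != 0.
  apply/eqP => e; move: hc'2; rewrite e expr0n /=; lra.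
exists c', (s / (2 * c')); split.
  have -> : (s / (2 * c')) ^+ 2 = s ^+ 2 / (4 * c' ^+ 2) by field.
  have -> : s ^+ 2 = 1 - c ^+ 2 by lra.
  rewrite hc'2; field; lra.
by field.
Qed.

Lemma rotE i j a b sg c s k l : rot i j a b sg c s k l = rotf i j a b sg c s k l.
Proof. by rewrite mxE. Qed.
Lemma mulrotE i j a b sg c s u k : (u *m rot i j a b sg c s) 0 k =
  u 0 i0 * rotf i j a b sg c s 0 k + u 0 i1 * rotf i j a b sg c s 1 k + u 0 i2 * rotf i j a b sg c s 2 k
  + u 0 i3 * rotf i j a b sg c s 3 k + u 0 i4 * rotf i j a b sg c s 4 k + u 0 i5 * rotf i j a b sg c s 5 k
  + u 0 i6 * rotf i j a b sg c s 6 k.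
Proof. by rewrite mulE !rotE. Qed.
Lemma trE M i j : M^T i j = M j i. Proof. by rewrite mxE. Qed.
Lemma idE i j : (1%:M : 'M[R]_7) i j = (i == j)%:R. Proof. by rewrite mxE. Qed.

Lemma mulrrE i j a b sg c s i' j' a' b' sg' c' s' k l :
  (rot i j a b sg c s *m rot i' j' a' b' sg' c' s') k l =
  \sum_(m < 7) rotf i j a b sg c s k m * rotf i' j' a' b' sg' c' s' m l.
Proof. by rewrite mxE; apply: eq_bigr => m _; rewrite !rotE. Qed.
Lemma trrE i j a b sg c s k l : (rot i j a b sg c s)^T k l = rotf i j a b sg c s l k.
Proof. by rewrite !mxE. Qed.

Definition gA (c s : R) := rot 0 1 4 5 1 c s.

Lemma gA_mul c1 s1 c2 s2 : gA c1 s1 *m gA c2 s2 = gA (c1 * c2 - s1 * s2) (s1 * c2 + c1 * s2).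
Proof. mcase; rewrite mulrrE rotE sum7 /rotf /=; ring. Qed.

Lemma gA_tr c s : (gA c s)^T = gA c (- s).
Proof. mcase; rewrite trrE rotE /rotf /=; ring. Qed.

Lemma gA_1 : gA 1 0 = 1%:M.
Proof. mcase; rewrite rotE idE /rotf /=; ring. Qed.

Lemma gA_orth c s : s ^+ 2 = 1 - c ^+ 2 -> gA c s *m (gA c s)^T = 1%:M.
Proof.
move=> h; rewrite gA_tr gA_mul -gA_1; congr gA; ring: h.
Qed.

Lemma gA_cross c s : s ^+ 2 = 1 - c ^+ 2 -> forall u w,
  cross7 (u *m gA c s) (w *m gA c s) = cross7 u w *m gA c s.
Proof.
move=> h u w; vcase; rewrite mulrotE !crossE /crossf /= !mulrotE /rotf /=; ring: h.
Qed.

Lemma gA_G2 c s : s ^+ 2 = 1 - c ^+ 2 -> G2grp (gA c s).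
Proof.
move=> h; have ho := gA_orth h; split=> //; split; last exact: gA_cross.
have [c' [s' [ec es]]] := half_angle (c := c) (s := s) ltac:(lra).
apply: (@det_sq_orth _ (gA c' s') ho); rewrite ec es gA_mul; congr gA; ring.
Qed.

Definition gB (c s : R) := rot 3 6 4 5 1 c s.

Lemma gB_mul c1 s1 c2 s2 : gB c1 s1 *m gB c2 s2 = gB (c1 * c2 - s1 * s2) (s1 * c2 + c1 * s2).
Proof. mcase; rewrite mulrrE rotE sum7 /rotf /=; ring. Qed.

Lemma gB_tr c s : (gB c s)^T = gB c (- s).
Proof. mcase; rewrite trrE rotE /rotf /=; ring. Qed.

Lemma gB_1 : gB 1 0 = 1%:M.
Proof. mcase; rewrite rotE idE /rotf /=; ring. Qed.

Lemma gB_orth c s : s ^+ 2 = 1 - c ^+ 2 -> gB c s *m (gB c s)^T = 1%:M.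
Proof.
move=> h; rewrite gB_tr gB_mul -gB_1; congr gB; ring: h.
Qed.

Lemma gB_cross c s : s ^+ 2 = 1 - c ^+ 2 -> forall u w,
  cross7 (u *m gB c s) (w *m gB c s) = cross7 u w *m gB c s.
Proof.
move=> h u w; vcase; rewrite mulrotE !crossE /crossf /= !mulrotE /rotf /=; ring: h.
Qed.

Lemma gB_G2 c s : s ^+ 2 = 1 - c ^+ 2 -> G2grp (gB c s).
Proof.
move=> h; have ho := gB_orth h; split=> //; split; last exact: gB_cross.
have [c' [s' [ec es]]] := half_angle (c := c) (s := s) ltac:(lra).
apply: (@det_sq_orth _ (gB c' s') ho); rewrite ec es gB_mul; congr gB; ring.
Qed.

Definition gC (c s : R) := rot 0 3 1 6 1 c s.

Lemma gC_mul c1 s1 c2 s2 : gC c1 s1 *m gC c2 s2 = gC (c1 * c2 - s1 * s2) (s1 * c2 + c1 * s2).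
Proof. mcase; rewrite mulrrE rotE sum7 /rotf /=; ring. Qed.

Lemma gC_tr c s : (gC c s)^T = gC c (- s).
Proof. mcase; rewrite trrE rotE /rotf /=; ring. Qed.

Lemma gC_1 : gC 1 0 = 1%:M.
Proof. mcase; rewrite rotE idE /rotf /=; ring. Qed.

Lemma gC_orth c s : s ^+ 2 = 1 - c ^+ 2 -> gC c s *m (gC c s)^T = 1%:M.
Proof.
move=> h; rewrite gC_tr gC_mul -gC_1; congr gC; ring: h.
Qed.

Lemma gC_cross c s : s ^+ 2 = 1 - c ^+ 2 -> forall u w,
  cross7 (u *m gC c s) (w *m gC c s) = cross7 u w *m gC c s.
Proof.
move=> h u w; vcase; rewrite mulrotE !crossE /crossf /= !mulrotE /rotf /=; ring: h.
Qed.

Lemma gC_G2 c s : s ^+ 2 = 1 - c ^+ 2 -> G2grp (gC c s).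
Proof.
move=> h; have ho := gC_orth h; split=> //; split; last exact: gC_cross.
have [c' [s' [ec es]]] := half_angle (c := c) (s := s) ltac:(lra).
apply: (@det_sq_orth _ (gC c' s') ho); rewrite ec es gC_mul; congr gC; ring.
Qed.

Definition gD (c s : R) := rot 3 4 5 6 1 c s.

Lemma gD_mul c1 s1 c2 s2 : gD c1 s1 *m gD c2 s2 = gD (c1 * c2 - s1 * s2) (s1 * c2 + c1 * s2).
Proof. mcase; rewrite mulrrE rotE sum7 /rotf /=; ring. Qed.

Lemma gD_tr c s : (gD c s)^T = gD c (- s).
Proof. mcase; rewrite trrE rotE /rotf /=; ring. Qed.

Lemma gD_1 : gD 1 0 = 1%:M.
Proof. mcase; rewrite rotE idE /rotf /=; ring. Qed.

Lemma gD_orth c s : s ^+ 2 = 1 - c ^+ 2 -> gD c s *m (gD c s)^T = 1%:M.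
Proof.
move=> h; rewrite gD_tr gD_mul -gD_1; congr gD; ring: h.
Qed.

Lemma gD_cross c s : s ^+ 2 = 1 - c ^+ 2 -> forall u w,
  cross7 (u *m gD c s) (w *m gD c s) = cross7 u w *m gD c s.
Proof.
move=> h u w; vcase; rewrite mulrotE !crossE /crossf /= !mulrotE /rotf /=; ring: h.
Qed.

Lemma gD_G2 c s : s ^+ 2 = 1 - c ^+ 2 -> G2grp (gD c s).
Proof.
move=> h; have ho := gD_orth h; split=> //; split; last exact: gD_cross.
have [c' [s' [ec es]]] := half_angle (c := c) (s := s) ltac:(lra).
apply: (@det_sq_orth _ (gD c' s') ho); rewrite ec es gD_mul; congr gD; ring.
Qed.

Definition gE (c s : R) := rot 2 3 0 5 1 c s.

Lemma gE_mul c1 s1 c2 s2 : gE c1 s1 *m gE c2 s2 = gE (c1 * c2 - s1 * s2) (s1 * c2 + c1 * s2).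
Proof. mcase; rewrite mulrrE rotE sum7 /rotf /=; ring. Qed.

Lemma gE_tr c s : (gE c s)^T = gE c (- s).
Proof. mcase; rewrite trrE rotE /rotf /=; ring. Qed.

Lemma gE_1 : gE 1 0 = 1%:M.
Proof. mcase; rewrite rotE idE /rotf /=; ring. Qed.

Lemma gE_orth c s : s ^+ 2 = 1 - c ^+ 2 -> gE c s *m (gE c s)^T = 1%:M.
Proof.
move=> h; rewrite gE_tr gE_mul -gE_1; congr gE; ring: h.
Qed.

Lemma gE_cross c s : s ^+ 2 = 1 - c ^+ 2 -> forall u w,
  cross7 (u *m gE c s) (w *m gE c s) = cross7 u w *m gE c s.
Proof.
move=> h u w; vcase; rewrite mulrotE !crossE /crossf /= !mulrotE /rotf /=; ring: h.
Qed.

Lemma gE_G2 c s : s ^+ 2 = 1 - c ^+ 2 -> G2grp (gE c s).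
Proof.
move=> h; have ho := gE_orth h; split=> //; split; last exact: gE_cross.
have [c' [s' [ec es]]] := half_angle (c := c) (s := s) ltac:(lra).
apply: (@det_sq_orth _ (gE c' s') ho); rewrite ec es gE_mul; congr gE; ring.
Qed.

Definition gF (c s : R) := rot 0 1 3 6 (-1) c s.

Lemma gF_mul c1 s1 c2 s2 : gF c1 s1 *m gF c2 s2 = gF (c1 * c2 - s1 * s2) (s1 * c2 + c1 * s2).
Proof. mcase; rewrite mulrrE rotE sum7 /rotf /=; ring. Qed.

Lemma gF_tr c s : (gF c s)^T = gF c (- s).
Proof. mcase; rewrite trrE rotE /rotf /=; ring. Qed.

Lemma gF_1 : gF 1 0 = 1%:M.
Proof. mcase; rewrite rotE idE /rotf /=; ring. Qed.

Lemma gF_orth c s : s ^+ 2 = 1 - c ^+ 2 -> gF c s *m (gF c s)^T = 1%:M.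
Proof.
move=> h; rewrite gF_tr gF_mul -gF_1; congr gF; ring: h.
Qed.

Lemma gF_cross c s : s ^+ 2 = 1 - c ^+ 2 -> forall u w,
  cross7 (u *m gF c s) (w *m gF c s) = cross7 u w *m gF c s.
Proof.
move=> h u w; vcase; rewrite mulrotE !crossE /crossf /= !mulrotE /rotf /=; ring: h.
Qed.

Lemma gF_G2 c s : s ^+ 2 = 1 - c ^+ 2 -> G2grp (gF c s).
Proof.
move=> h; have ho := gF_orth h; split=> //; split; last exact: gF_cross.
have [c' [s' [ec es]]] := half_angle (c := c) (s := s) ltac:(lra).
apply: (@det_sq_orth _ (gF c' s') ho); rewrite ec es gF_mul; congr gF; ring.
Qed.

Definition gG (c s : R) := rot 0 4 1 5 (-1) c s.

Lemma gG_mul c1 s1 c2 s2 : gG c1 s1 *m gG c2 s2 = gG (c1 * c2 - s1 * s2) (s1 * c2 + c1 * s2).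
Proof. mcase; rewrite mulrrE rotE sum7 /rotf /=; ring. Qed.

Lemma gG_tr c s : (gG c s)^T = gG c (- s).
Proof. mcase; rewrite trrE rotE /rotf /=; ring. Qed.

Lemma gG_1 : gG 1 0 = 1%:M.
Proof. mcase; rewrite rotE idE /rotf /=; ring. Qed.

Lemma gG_orth c s : s ^+ 2 = 1 - c ^+ 2 -> gG c s *m (gG c s)^T = 1%:M.
Proof.
move=> h; rewrite gG_tr gG_mul -gG_1; congr gG; ring: h.
Qed.

Lemma gG_cross c s : s ^+ 2 = 1 - c ^+ 2 -> forall u w,
  cross7 (u *m gG c s) (w *m gG c s) = cross7 u w *m gG c s.
Proof.
move=> h u w; vcase; rewrite mulrotE !crossE /crossf /= !mulrotE /rotf /=; ring: h.
Qed.

Lemma gG_G2 c s : s ^+ 2 = 1 - c ^+ 2 -> G2grp (gG c s).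
Proof.
move=> h; have ho := gG_orth h; split=> //; split; last exact: gG_cross.
have [c' [s' [ec es]]] := half_angle (c := c) (s := s) ltac:(lra).
apply: (@det_sq_orth _ (gG c' s') ho); rewrite ec es gG_mul; congr gG; ring.
Qed.

Lemma G2grp1 : G2grp 1%:M.
Proof. split; first by rewrite trmx1 mulmx1. by split; [exact: det1 | move=> u w; rewrite !mulmx1]. Qed.

Lemma G2grp_mul g h : G2grp g -> G2grp h -> G2grp (g *m h).
Proof.
move=> [og [dg cg]] [oh [dh ch]]; split; [| split].
- by rewrite trmx_mul mulmxA -(mulmxA g) oh mulmx1 og.
- by rewrite det_mulmx dg dh mulr1.
- by move=> u w; rewrite !mulmxA ch cg.
Qed.

Lemma G2grp_tr g : G2grp g -> G2grp g^T.
Proof.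
move=> [og [dg cg]]; have og' := mulmx1C og; split; [|split].
- by rewrite trmxK.
- by rewrite det_tr.
- move=> u w; have := cg (u *m g^T) (w *m g^T); rewrite -!mulmxA og' !mulmx1 => e.
  by rewrite [in RHS]e -mulmxA og mulmx1.
Qed.

Lemma G2grp_orth' g : G2grp g -> g^T *m g = 1%:M.
Proof. by move=> [og _]; exact: mulmx1C. Qed.

Lemma in_g2_conj N g : in_g2 N -> G2grp g -> in_g2 (g *m N *m g^T).
Proof.
move=> [sk dN] hg; have [og [_ cg]] := hg; have [_ [_ cgt]] := G2grp_tr hg.
split.
- by rewrite /skew7 !trmx_mul trmxK sk mulNmx mulmxN mulmxA.
- move=> v w.
  rewrite !mulmxA -cg dN mulmxDl -!cgt -!mulmxA og !mulmx1.
  by rewrite !mulmxA.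
Qed.

Definition reach N N' := exists g, G2grp g /\ N' = g *m N *m g^T.

Lemma reach_refl N : reach N N.
Proof. by exists 1%:M; split; [exact: G2grp1 | rewrite trmx1 mul1mx mulmx1]. Qed.

Lemma reach_trans N1 N2 N3 : reach N1 N2 -> reach N2 N3 -> reach N1 N3.
Proof.
move=> [g [hg ->]] [h [hh ->]]; exists (h *m g); split; first exact: G2grp_mul.
by rewrite trmx_mul !mulmxA.
Qed.

Lemma reach_g2 N N' : in_g2 N -> reach N N' -> in_g2 N'.
Proof. by move=> hN [g [hg ->]]; exact: in_g2_conj. Qed.

Definition e_ (k : 'I_7) : 'rV[R]_7 := stdb R k.

Lemma e_E k l : e_ k 0 l = (k == l)%:R.
Proof. by rewrite /e_ /stdb mxE /= eq_sym. Qed.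

Lemma dot_self u : dot7 u u = (u *m u^T) 0 0.
Proof. by rewrite /dot7 !mxE; apply: eq_bigr => i _; rewrite ?mxE. Qed.

Lemma dot_orth u g : g *m g^T = 1%:M -> dot7 (u *m g) (u *m g) = dot7 u u.
Proof. by move=> og; rewrite !dot_self trmx_mul !mulmxA -(mulmxA u) og mulmx1. Qed.

Lemma skew_ker N : skew7 N -> exists v : 'rV[R]_7, v != 0 /\ v *m N = 0.
Proof.
move=> sk.
have h : \det N = - \det N.
  by rewrite -{1}det_tr sk -scaleN1r detZ -signr_odd /= expr1 mulN1r.
have /det0P [v hv e] : \det N == 0 by apply/eqP; lra.
by exists v.
Qed.

Lemma dot_gt0 u : u != 0 -> 0 < dot7 u u.
Proof.
move=> hu; rewrite dot7E; rewrite ltNge; apply/negP => hle; move/eqP: hu; apply.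
apply: vec_ext; apply: ord7_cases; rewrite mxE; nra.
Qed.

Lemma dotZ (a : R) u w : dot7 (a *: u) (a *: w) = a ^+ 2 * dot7 u w.
Proof. rewrite !dot7E !mxE; ring. Qed.

Lemma normalize u : u != 0 -> exists a : R, dot7 (a *: u) (a *: u) = 1.
Proof.
move=> hu; have hp := dot_gt0 hu.
set r := Num.sqrt (dot7 u u).
have hr : 0 < r by rewrite sqrtr_gt0.
have hr2 : r ^+ 2 = dot7 u u by rewrite sqr_sqrtr // ltW.
exists r^-1; rewrite dotZ -hr2; field; lra.
Qed.

Lemma unit_ker N : skew7 N -> exists v : 'rV[R]_7, dot7 v v = 1 /\ v *m N = 0.
Proof.
move=> /skew_ker [v [hv e]]; have [a ha] := normalize hv.
by exists (a *: v); split => //; rewrite -scalemxAl e scaler0.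
Qed.

End Work.
Arguments e_ {R}.

Section Work2.
Variable R : rcfType.
Implicit Types (u v w x y : 'rV[R]_7) (M N G H B : 'M[R]_7).
Ltac mcase := apply: mat_ext;
  apply: ord7_cases; apply: ord7_cases.
Ltac vcase := apply: vec_ext; apply: ord7_cases.
Local Notation e k := (@e_ R k).
Lemma givens (x y : R) : exists c s, s ^+ 2 = 1 - c ^+ 2 /\ c * y - s * x = 0 /\
   c * x + s * y = Num.sqrt (x ^+ 2 + y ^+ 2).
Proof.
have [h|h] := eqVneq (x ^+ 2 + y ^+ 2) 0.
  have hx : x = 0 by nra.
  have hy : y = 0 by nra.
  by exists 1, 0; rewrite h sqrtr0 hx hy; split; [ring | split; ring].
have hp : 0 < x ^+ 2 + y ^+ 2 by rewrite lt_def h /=; nra.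
set r := Num.sqrt (x ^+ 2 + y ^+ 2).
have hr : 0 < r by rewrite sqrtr_gt0.
have hr2 : r ^+ 2 = x ^+ 2 + y ^+ 2 by rewrite sqr_sqrtr // ltW.
exists (x / r), (y / r); split; last split.
- have -> : (y / r) ^+ 2 = y ^+ 2 / r ^+ 2 by field; lra.
  have -> : (x / r) ^+ 2 = x ^+ 2 / r ^+ 2 by field; lra.
  rewrite hr2; field; lra.
- ring.
- have -> : x / r * x + y / r * y = r ^+ 2 / r by rewrite hr2; field; lra.
  field; lra.
Qed.

Lemma eA3 (c s : R) : e_ i2 *m gA c s = e_ i2.
Proof. vcase; rewrite mulrotE !e_E /rotf /=; ring. Qed.
Lemma eB3 (c s : R) : e_ i2 *m gB c s = e_ i2.
Proof. vcase; rewrite mulrotE !e_E /rotf /=; ring. Qed.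
Lemma eC3 (c s : R) : e_ i2 *m gC c s = e_ i2.
Proof. vcase; rewrite mulrotE !e_E /rotf /=; ring. Qed.
Lemma eD3 (c s : R) : e_ i2 *m gD c s = e_ i2.
Proof. vcase; rewrite mulrotE !e_E /rotf /=; ring. Qed.

Ltac vc := rewrite mulrotE /rotf /=.

Lemma collapse5 (u : 'rV[R]_7) : exists H, G2grp H /\ e_ i2 *m H = e_ i2 /\
  (u *m H) 0 i0 = 0 /\ (u *m H) 0 i1 = 0 /\ (u *m H) 0 i4 = 0 /\ (u *m H) 0 i5 = 0 /\
  (u *m H) 0 i6 = 0 /\ 0 <= (u *m H) 0 i3 /\ (u *m H) 0 i2 = u 0 i2.
Proof.
have [c1 [s1 [h1 [z1 _]]]] := givens (u 0 i0) (u 0 i1).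
set u1 := u *m gA c1 (- s1).
have f11 : u1 0 i1 = 0 by rewrite /u1; vc; lra.
have f12 : u1 0 i2 = u 0 i2 by rewrite /u1; vc; ring.
have [c2 [s2 [h2 [z2 _]]]] := givens (u1 0 i3) (u1 0 i6).
set u2 := u1 *m gB c2 (- s2).
have f21 : u2 0 i1 = 0 by rewrite /u2; vc; rewrite f11; ring.
have f26 : u2 0 i6 = 0 by rewrite /u2; vc; lra.
have f22 : u2 0 i2 = u 0 i2 by rewrite /u2; vc; rewrite f12; ring.
have [c3 [s3 [h3 [z3 _]]]] := givens (u2 0 i3) (u2 0 i0).
set u3 := u2 *m gC c3 s3.
have f30 : u3 0 i0 = 0 by rewrite /u3; vc; lra.
have f31 : u3 0 i1 = 0 by rewrite /u3; vc; rewrite f21 f26; ring.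
have f36 : u3 0 i6 = 0 by rewrite /u3; vc; rewrite f21 f26; ring.
have f32 : u3 0 i2 = u 0 i2 by rewrite /u3; vc; rewrite f22; ring.
have [c4 [s4 [h4 [z4 _]]]] := givens (u3 0 i4) (u3 0 i5).
set u4 := u3 *m gA c4 (- s4).
have f40 : u4 0 i0 = 0 by rewrite /u4; vc; rewrite f30 f31; ring.
have f41 : u4 0 i1 = 0 by rewrite /u4; vc; rewrite f30 f31; ring.
have f45 : u4 0 i5 = 0 by rewrite /u4; vc; lra.
have f46 : u4 0 i6 = 0 by rewrite /u4; vc; rewrite f36; ring.
have f42 : u4 0 i2 = u 0 i2 by rewrite /u4; vc; rewrite f32; ring.
have [c5 [s5 [h5 [z5 p5]]]] := givens (u4 0 i3) (u4 0 i4).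
set u5 := u4 *m gD c5 (- s5).
exists (gA c1 (- s1) *m gB c2 (- s2) *m gC c3 s3 *m gA c4 (- s4) *m gD c5 (- s5)).
have hs : forall s : R, (- s) ^+ 2 = s ^+ 2 by move=> s; ring.
split.
  apply: G2grp_mul; last by apply: gD_G2; rewrite hs.
  apply: G2grp_mul; last by apply: gA_G2; rewrite hs.
  apply: G2grp_mul; last by apply: gC_G2.
  by apply: G2grp_mul; [apply: gA_G2 | apply: gB_G2]; rewrite hs.
split; first by rewrite !mulmxA eA3 eB3 eC3 eA3 eD3.
have -> : u *m (gA c1 (- s1) *m gB c2 (- s2) *m gC c3 s3 *m gA c4 (- s4) *m gD c5 (- s5)) = u5
  by rewrite /u5 /u4 /u3 /u2 /u1 !mulmxA.
rewrite /u5; split; first by vc; rewrite f40 f45 f46; ring.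
split; first by vc; rewrite f41 f45 f46; ring.
split; first by vc; lra.
split; first by vc; rewrite f45 f46; ring.
split; first by vc; rewrite f45 f46; ring.
split; last by vc; rewrite f42; ring.
vc; have -> : u4 0 i0 * 0 + u4 0 i1 * 0 + u4 0 i2 * 0 + u4 0 i3 * c5 + u4 0 i4 * - - s5 +
  u4 0 i5 * 0 + u4 0 i6 * 0 = c5 * u4 0 i3 + s5 * u4 0 i4 by ring.
by rewrite p5 sqrtr_ge0.
Qed.
Lemma skewE N a b : skew7 N -> N a b = - N b a.
Proof. by move=> sk; rewrite -trE sk mxE. Qed.

Lemma dotE' u w : dot7 u w = (u *m w^T) 0 0.
Proof. by rewrite /dot7 !mxE; apply: eq_bigr => i _; rewrite ?mxE. Qed.

Lemma trE1 (m : 'M[R]_1) : m^T 0 0 = m 0 0. Proof. by rewrite mxE. Qed.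
Lemma oppE1 (m : 'M[R]_1) : (- m) 0 0 = - m 0 0. Proof. by rewrite mxE. Qed.

Lemma dot_skew N x : skew7 N -> dot7 (x *m N) x = 0.
Proof.
move=> sk; rewrite dotE'.
have e : (x *m N *m x^T)^T = - (x *m N *m x^T).
  by rewrite !trmx_mul trmxK sk mulNmx mulmxN mulmxA.
have := congr1 (fun m : 'M[R]_1 => m 0 0) e => /=; rewrite trE1 oppE1 => h; lra.
Qed.

Lemma vaddE u w k : (u + w) 0 k = u 0 k + w 0 k. Proof. by rewrite mxE. Qed.
Lemma voppE u k : (- u) 0 k = - u 0 k. Proof. by rewrite mxE. Qed.
Lemma vscaleE (a : R) u k : (a *: u) 0 k = a * u 0 k. Proof. by rewrite mxE. Qed.
Lemma v0E k : (0 : 'rV[R]_7) 0 k = 0. Proof. by rewrite mxE. Qed.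

Lemma cross0l w : cross7 0 w = 0.
Proof. vcase; rewrite crossE /crossf /= !v0E; ring. Qed.

Lemma crossDr u w w' : cross7 u (w + w') = cross7 u w + cross7 u w'.
Proof. vcase; rewrite vaddE !crossE /crossf /= !vaddE; ring. Qed.
Lemma crossZr (a : R) u w : cross7 u (a *: w) = a *: cross7 u w.
Proof. vcase; rewrite vscaleE !crossE /crossf /= !vscaleE; ring. Qed.

Lemma Jcomm N : in_g2 N -> e i2 *m N = 0 ->
  forall x : 'rV[R]_7, cross7 (e i2) x *m N = cross7 (e i2) (x *m N).
Proof. by move=> [_ dN] e3N x; rewrite dN e3N cross0l add0r. Qed.

Lemma cross3_0 : cross7 (e i2) (e i0) = e i1.
Proof. vcase; rewrite crossE /crossf /= !e_E /=; ring. Qed.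
Lemma cross3_3 : cross7 (e i2) (e i3) = e i6.
Proof. vcase; rewrite crossE /crossf /= !e_E /=; ring. Qed.
Lemma cross3_5 : cross7 (e i2) (e i5) = e i4.
Proof. vcase; rewrite crossE /crossf /= !e_E /=; ring. Qed.

Lemma g2_rels N : in_g2 N -> e i2 *m N = 0 ->
  [/\ forall c, N i1 c = (cross7 (e i2) (e i0 *m N)) 0 c,
      forall c, N i6 c = (cross7 (e i2) (e i3 *m N)) 0 c &
      forall c, N i4 c = (cross7 (e i2) (e i5 *m N)) 0 c].
Proof.
move=> hN e3N; have hJ := Jcomm hN e3N.
have rowE : forall a c, N a c = (e_ a *m N) 0 c.
  by move=> a c; rewrite mulE !e_E; move: a; apply: ord7_cases => /=; ring.
split=> c; rewrite rowE -?cross3_0 -?cross3_3 -?cross3_5 hJ //.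
Qed.
Lemma rowN N a c : (e a *m N) 0 c = N a c.
Proof. by rewrite mulE !e_E; move: a; apply: ord7_cases => /=; ring. Qed.

Notation j0 := (@Ordinal 3 0 isT).
Notation j1 := (@Ordinal 3 1 isT).
Notation j2 := (@Ordinal 3 2 isT).

Definition reI (j : 'I_3) : 'I_7 := match val j with 0%N => i0 | 1%N => i3 | _ => i5 end.
Definition imI (j : 'I_3) : 'I_7 := match val j with 0%N => i1 | 1%N => i6 | _ => i4 end.

Definition cmat N : 'M[R[i]]_3 := \matrix_(j, k) ((N (reI j) (reI k)) +i* (N (reI j) (imI k)))%C.

Definition realify (z : 'rV[R[i]]_3) : 'rV[R]_7 := \row_c
  match val c with
  | 0%N => complex.Re (z 0 j0) | 1%N => complex.Im (z 0 j0) | 2%N => 0 | 3%N => complex.Re (z 0 j1)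
  | 4%N => complex.Im (z 0 j2) | 5%N => complex.Re (z 0 j2) | _ => complex.Im (z 0 j1) end.

Lemma cmatE N j k : cmat N j k = ((N (reI j) (reI k)) +i* (N (reI j) (imI k)))%C.
Proof. by rewrite mxE. Qed.

Lemma cReD (x y : R[i]) : complex.Re (x + y) = complex.Re x + complex.Re y. Proof. by case: x; case: y. Qed.
Lemma cImD (x y : R[i]) : complex.Im (x + y) = complex.Im x + complex.Im y. Proof. by case: x; case: y. Qed.
Lemma cReM (x y : R[i]) : complex.Re (x * y) = complex.Re x * complex.Re y - complex.Im x * complex.Im y. Proof. by case: x; case: y. Qed.
Lemma cImM (x y : R[i]) : complex.Im (x * y) = complex.Re x * complex.Im y + complex.Im x * complex.Re y. Proof. by case: x; case: y. Qed.

Lemma sum3 (F : 'I_3 -> R[i]) : \sum_(j < 3) F j = F j0 + F j1 + F j2.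
Proof.
rewrite !big_ord_recr big_ord0 /= add0r.
by repeat congr (_ + _); congr F; apply/val_inj.
Qed.

Lemma realify_mul N z : in_g2 N -> e i2 *m N = 0 -> realify (z *m cmat N) = realify z *m N.
Proof.
move=> hN e3N; have [E1 E6 E4] := g2_rels hN e3N.
have [sk _] := hN.
have z2 : forall c, N i2 c = 0 by move=> c; rewrite -rowN e3N v0E.
have z2' : forall c, N c i2 = 0 by move=> c; rewrite (skewE _ _ sk) z2 oppr0.
have r10 : N i1 i0 = - N i0 i1.
  by rewrite E1 crossE /crossf /= !e_E !rowN /=; ring.
have r11 : N i1 i1 = N i0 i0.
  by rewrite E1 crossE /crossf /= !e_E !rowN /=; ring.
have r13 : N i1 i3 = - N i0 i6.
  by rewrite E1 crossE /crossf /= !e_E !rowN /=; ring.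
have r14 : N i1 i4 = N i0 i5.
  by rewrite E1 crossE /crossf /= !e_E !rowN /=; ring.
have r15 : N i1 i5 = - N i0 i4.
  by rewrite E1 crossE /crossf /= !e_E !rowN /=; ring.
have r16 : N i1 i6 = N i0 i3.
  by rewrite E1 crossE /crossf /= !e_E !rowN /=; ring.
have r60 : N i6 i0 = - N i3 i1.
  by rewrite E6 crossE /crossf /= !e_E !rowN /=; ring.
have r61 : N i6 i1 = N i3 i0.
  by rewrite E6 crossE /crossf /= !e_E !rowN /=; ring.
have r63 : N i6 i3 = - N i3 i6.
  by rewrite E6 crossE /crossf /= !e_E !rowN /=; ring.
have r64 : N i6 i4 = N i3 i5.
  by rewrite E6 crossE /crossf /= !e_E !rowN /=; ring.
have r65 : N i6 i5 = - N i3 i4.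
  by rewrite E6 crossE /crossf /= !e_E !rowN /=; ring.
have r66 : N i6 i6 = N i3 i3.
  by rewrite E6 crossE /crossf /= !e_E !rowN /=; ring.
have r40 : N i4 i0 = - N i5 i1.
  by rewrite E4 crossE /crossf /= !e_E !rowN /=; ring.
have r41 : N i4 i1 = N i5 i0.
  by rewrite E4 crossE /crossf /= !e_E !rowN /=; ring.
have r43 : N i4 i3 = - N i5 i6.
  by rewrite E4 crossE /crossf /= !e_E !rowN /=; ring.
have r44 : N i4 i4 = N i5 i5.
  by rewrite E4 crossE /crossf /= !e_E !rowN /=; ring.
have r45 : N i4 i5 = - N i5 i4.
  by rewrite E4 crossE /crossf /= !e_E !rowN /=; ring.
have r46 : N i4 i6 = N i5 i3.
  by rewrite E4 crossE /crossf /= !e_E !rowN /=; ring.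
vcase; rewrite mulE !mxE /= ?sum3 ?cmatE /= ?cReD ?cImD ?cReM ?cImM /= ?z2 ?z2' ?r10 ?r11 ?r13 ?r14 ?r15 ?r16 ?r60 ?r61 ?r63 ?r64 ?r65 ?r66 ?r40 ?r41 ?r43 ?r44 ?r45 ?r46; ring.
Qed.

Lemma realify_scale (a : R[i]) z : realify (a *: z) =
  complex.Re a *: realify z + complex.Im a *: cross7 (e i2) (realify z).
Proof.
vcase; rewrite vaddE !vscaleE crossE /crossf /= !e_E !mxE /= ?cReM ?cImM; ring.
Qed.

Lemma complex_eq0 (x : R[i]) : complex.Re x = 0 -> complex.Im x = 0 -> x = 0.
Proof. by case: x => a b /= -> ->. Qed.

Lemma realify_eq0 z : realify z = 0 -> z = 0.
Proof.
move=> h.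
have c : forall k, realify z 0 k = 0 by move=> k; rewrite h v0E.
have := c i0; have := c i1; have := c i3; have := c i4; have := c i5; have := c i6.
rewrite !mxE /= => h6 h5 h4 h3 h1 h0.
apply/rowP => j; rewrite mxE; case: j => [[|[|[|//]]]] hj.
- by rewrite (bool_irrelevance hj isT); apply: complex_eq0.
- by rewrite (bool_irrelevance hj isT); apply: complex_eq0.
- by rewrite (bool_irrelevance hj isT); apply: complex_eq0.
Qed.

Lemma dot_cross3 u : dot7 (cross7 (e i2) u) u = 0.
Proof. rewrite dot7E !crossE /crossf /= !e_E /=; ring. Qed.

Lemma dot_lin (a b : R) u w x : dot7 (a *: u + b *: w) x = a * dot7 u x + b * dot7 w x.
Proof. rewrite !dot7E !vaddE !vscaleE; ring. Qed.

Lemma complex_eig N : in_g2 N -> e i2 *m N = 0 -> exists w (b : R),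
  dot7 w w = 1 /\ w 0 i2 = 0 /\ w *m N = b *: cross7 (e i2) w.
Proof.
move=> hN e3N; have [sk _] := hN.
have [a ha] := Theorem7' (cmat N) (isT : (0 < 3)%N).
have [z hz nz] := eigenvalueP ha.
set w0 := realify z.
have e1 : w0 *m N = complex.Re a *: w0 + complex.Im a *: cross7 (e i2) w0.
  by rewrite -realify_mul // hz realify_scale.
have w0nz : w0 != 0 by apply/eqP => /realify_eq0 h; move/eqP: nz; apply.
have hp := dot_gt0 w0nz.
have hRe : complex.Re a = 0.
  have := dot_skew w0 sk; rewrite e1 dot_lin dot_cross3 mulr0 addr0 => /eqP.
  by rewrite mulf_eq0 => /orP [/eqP // | /eqP h]; move: hp; rewrite h ltxx.
have [k hk] := normalize w0nz.
exists (k *: w0), (complex.Im a); split => //; split.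
  by rewrite vscaleE /w0 mxE /= mulr0.
by rewrite -scalemxAl e1 hRe scale0r add0r crossZr !scalerA mulrC.
Qed.

End Work2.

Section Work3.
Variable R : rcfType.
Implicit Types (u v w x y : 'rV[R]_7) (M N G H B : 'M[R]_7).
Ltac mcase := apply: mat_ext;
  apply: ord7_cases; apply: ord7_cases.
Ltac vcase := apply: vec_ext; apply: ord7_cases.
Local Notation e k := (@e_ R k).
Ltac vc := rewrite mulrotE /rotf /=.

Lemma dot_G2 u g : G2grp g -> dot7 (u *m g) (u *m g) = dot7 u u.
Proof. by move=> [og _]; exact: dot_orth. Qed.

Lemma eE3 (c s : R) : e i2 *m gE c s = c *: e i2 + s *: e i3.
Proof. vcase; rewrite mulrotE vaddE !vscaleE !e_E /rotf /=; ring. Qed.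

Lemma to_e3 v : dot7 v v = 1 -> exists G, G2grp G /\ v *m G = e i2.
Proof.
move=> hv.
have [H [hH [_ [h0 [h1 [h4 [h5 [h6 [h3 _]]]]]]]]] := collapse5 v.
set x := v *m H in h0 h1 h4 h5 h6 h3 *.
have [c [s [hcs [z p]]]] := givens (x 0 i2) (x 0 i3).
have hG : G2grp (H *m gE c (- s)) by apply: G2grp_mul => //; apply: gE_G2; rewrite sqrrN.
exists (H *m gE c (- s)); split => //.
have hd := dot_G2 v hG; rewrite hv mulmxA -/x in hd.
set y := x *m gE c (- s) in hd *.
have y0 : y 0 i0 = 0 by rewrite /y; vc; rewrite h0 h5; ring.
have y1 : y 0 i1 = 0 by rewrite /y; vc; rewrite h1; ring.
have y3 : y 0 i3 = 0 by rewrite /y; vc; lra.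
have y4 : y 0 i4 = 0 by rewrite /y; vc; rewrite h4; ring.
have y5 : y 0 i5 = 0 by rewrite /y; vc; rewrite h0 h5; ring.
have y6 : y 0 i6 = 0 by rewrite /y; vc; rewrite h6; ring.
have y2e : y 0 i2 = c * x 0 i2 + s * x 0 i3 by rewrite /y; vc; rewrite h0 h1 h4 h5 h6; ring.
have y2 : 0 <= y 0 i2 by rewrite y2e p sqrtr_ge0.
have y21 : y 0 i2 = 1.
  rewrite dot7E y0 y1 y3 y4 y5 y6 in hd; nra.
rewrite mulmxA -/x -/y; vcase; rewrite e_E /= ?y0 ?y1 ?y21 ?y3 ?y4 ?y5 ?y6 //.
Qed.

Lemma to_e4 w : dot7 w w = 1 -> w 0 i2 = 0 ->
  exists H, G2grp H /\ e i2 *m H = e i2 /\ w *m H = e i3.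
Proof.
move=> hw w2.
have [H [hH [e3H [h0 [h1 [h4 [h5 [h6 [h3 h2]]]]]]]]] := collapse5 w.
exists H; split => //; split => //.
have hd := dot_G2 w hH; rewrite hw in hd.
have y3 : (w *m H) 0 i3 = 1 by rewrite dot7E h0 h1 h2 w2 h4 h5 h6 in hd; nra.
vcase; rewrite e_E /= ?h0 ?h1 ?h2 ?w2 ?y3 ?h4 ?h5 ?h6 //.
Qed.

Lemma move_back G x y : G2grp G -> x *m G = y -> y *m G^T = x.
Proof. by move=> [og _] <-; rewrite -mulmxA og mulmx1. Qed.

Lemma eig_transport N H x (t : R) : G2grp H -> e i2 *m H = e i2 ->
  x *m N = t *: cross7 (e i2) x ->
  (x *m H) *m (H^T *m N *m H) = t *: cross7 (e i2) (x *m H).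
Proof.
move=> hH e3H hx; have [og [_ cg]] := hH.
by rewrite !mulmxA -(mulmxA x) og mulmx1 hx -scalemxAl -cg e3H.
Qed.

Lemma ker_transport N H : G2grp H -> e i2 *m H = e i2 -> e i2 *m N = 0 ->
  e i2 *m (H^T *m N *m H) = 0.
Proof.
move=> hH e3H e3N; have := move_back hH e3H => e3H'.
by rewrite !mulmxA e3H' e3N !mul0mx.
Qed.
Notation k0 := (@Ordinal 2 0 isT).
Notation k1 := (@Ordinal 2 1 isT).

Definition reJ (j : 'I_2) : 'I_7 := match val j with 0%N => i0 | _ => i5 end.
Definition imJ (j : 'I_2) : 'I_7 := match val j with 0%N => i1 | _ => i4 end.

Definition cmat2 N : 'M[R[i]]_2 := \matrix_(j, k) ((N (reJ j) (reJ k)) +i* (N (reJ j) (imJ k)))%C.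
Lemma cmat2E N j k : cmat2 N j k = ((N (reJ j) (reJ k)) +i* (N (reJ j) (imJ k)))%C.
Proof. by rewrite mxE. Qed.

Definition realify2 (z : 'rV[R[i]]_2) : 'rV[R]_7 := \row_c
  match val c with
  | 0%N => complex.Re (z 0 k0) | 1%N => complex.Im (z 0 k0)
  | 4%N => complex.Im (z 0 k1) | 5%N => complex.Re (z 0 k1) | _ => 0 end.

Lemma sum2 (F : 'I_2 -> R[i]) : \sum_(j < 2) F j = F k0 + F k1.
Proof.
rewrite !big_ord_recr big_ord0 /= add0r.
by repeat congr (_ + _); congr F; apply/val_inj.
Qed.

Lemma realify2_mul N z (b : R) : in_g2 N -> e i2 *m N = 0 -> e i3 *m N = b *: e i6 ->
  realify2 (z *m cmat2 N) = realify2 z *m N.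
Proof.
move=> hN e3N e4N; have [E1 E6 E4] := g2_rels hN e3N.
have [sk _] := hN.
have z2 : forall c, N i2 c = 0 by move=> c; rewrite -rowN e3N v0E.
have z2' : forall c, N c i2 = 0 by move=> c; rewrite (skewE _ _ sk) z2 oppr0.
have z3 : forall c, N i3 c = b * e i6 0 c by move=> c; rewrite -rowN e4N vscaleE.
have z3' : forall c, N c i3 = - (b * e i6 0 c) by move=> c; rewrite (skewE _ _ sk) z3.
have z6 : forall c, N i6 c = - (b * e i3 0 c).
  by apply: ord7_cases; rewrite E6 crossE /crossf /= !e_E !rowN !z3 !e_E /=; ring.
have z6' : forall c, N c i6 = b * e i3 0 c by move=> c; rewrite (skewE _ _ sk) z6 opprK.
have r10 : N i1 i0 = - N i0 i1 by rewrite E1 crossE /crossf /= !e_E !rowN /=; ring.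
have r11 : N i1 i1 = N i0 i0 by rewrite E1 crossE /crossf /= !e_E !rowN /=; ring.
have r14 : N i1 i4 = N i0 i5 by rewrite E1 crossE /crossf /= !e_E !rowN /=; ring.
have r15 : N i1 i5 = - N i0 i4 by rewrite E1 crossE /crossf /= !e_E !rowN /=; ring.
have r40 : N i4 i0 = - N i5 i1 by rewrite E4 crossE /crossf /= !e_E !rowN /=; ring.
have r41 : N i4 i1 = N i5 i0 by rewrite E4 crossE /crossf /= !e_E !rowN /=; ring.
have r44 : N i4 i4 = N i5 i5 by rewrite E4 crossE /crossf /= !e_E !rowN /=; ring.
have r45 : N i4 i5 = - N i5 i4 by rewrite E4 crossE /crossf /= !e_E !rowN /=; ring.
vcase; rewrite mulE !mxE /= ?sum2 ?cmat2E /= ?cReD ?cImD ?cReM ?cImM /= ?z2 ?z2' ?z3 ?z3' ?z6 ?z6'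
  ?r10 ?r11 ?r14 ?r15 ?r40 ?r41 ?r44 ?r45 ?e_E /=; ring.
Qed.

Lemma realify2_scale (a : R[i]) z : realify2 (a *: z) =
  complex.Re a *: realify2 z + complex.Im a *: cross7 (e i2) (realify2 z).
Proof.
vcase; rewrite vaddE !vscaleE crossE /crossf /= !e_E !mxE /= ?cReM ?cImM; ring.
Qed.

Lemma realify2_eq0 z : realify2 z = 0 -> z = 0.
Proof.
move=> h.
have c : forall k, realify2 z 0 k = 0 by move=> k; rewrite h v0E.
have := c i0; have := c i1; have := c i4; have := c i5.
rewrite !mxE /= => h5 h4 h1 h0.
apply/rowP => j; rewrite mxE; case: j => [[|[|//]]] hj.
- by rewrite (bool_irrelevance hj isT); apply: complex_eq0.
- by rewrite (bool_irrelevance hj isT); apply: complex_eq0.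
Qed.

Lemma complex_eig2 N (b : R) : in_g2 N -> e i2 *m N = 0 -> e i3 *m N = b *: e i6 ->
  exists u (b' : R), dot7 u u = 1 /\ u 0 i2 = 0 /\ u 0 i3 = 0 /\ u 0 i6 = 0 /\
    u *m N = b' *: cross7 (e i2) u.
Proof.
move=> hN e3N e4N; have [sk _] := hN.
have [a ha] := Theorem7' (cmat2 N) (isT : (0 < 2)%N).
have [z hz nz] := eigenvalueP ha.
set w0 := realify2 z.
have e1 : w0 *m N = complex.Re a *: w0 + complex.Im a *: cross7 (e i2) w0.
  by rewrite -(realify2_mul _ hN e3N e4N) hz realify2_scale.
have w0nz : w0 != 0 by apply/eqP => /realify2_eq0 h; move/eqP: nz; apply.
have hp := dot_gt0 w0nz.
have hRe : complex.Re a = 0.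
  have := dot_skew w0 sk; rewrite e1 dot_lin dot_cross3 mulr0 addr0 => /eqP.
  by rewrite mulf_eq0 => /orP [/eqP // | /eqP h]; move: hp; rewrite h ltxx.
have [k hk] := normalize w0nz.
exists (k *: w0), (complex.Im a); split => //; split; last split; last split.
- by rewrite vscaleE /w0 mxE /= mulr0.
- by rewrite vscaleE /w0 mxE /= mulr0.
- by rewrite vscaleE /w0 mxE /= mulr0.
by rewrite -scalemxAl e1 hRe scale0r add0r crossZr !scalerA mulrC.
Qed.
Lemma eF3 (c s : R) : e i2 *m gF c s = e i2.
Proof. vcase; rewrite mulrotE !e_E /rotf /=; ring. Qed.
Lemma eG3 (c s : R) : e i2 *m gG c s = e i2.
Proof. vcase; rewrite mulrotE !e_E /rotf /=; ring. Qed.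

Lemma to_e1 u : dot7 u u = 1 -> u 0 i2 = 0 -> u 0 i3 = 0 -> u 0 i6 = 0 ->
  exists H, G2grp H /\ e i2 *m H = e i2 /\ u *m H = e i0 /\
   let y := e i3 *m H^T in
   [/\ y 0 i0 = 0, y 0 i1 = 0, y 0 i2 = 0, y 0 i4 = 0 & y 0 i5 = 0].
Proof.
move=> hu u2 u3 u6.
have [c1 [s1 [h1 [z1 _]]]] := givens (u 0 i0) (u 0 i1).
set x1 := u *m gF c1 (- s1).
have f11 : x1 0 i1 = 0 by rewrite /x1; vc; lra.
have f12 : x1 0 i2 = 0 by rewrite /x1; vc; rewrite u2; ring.
have f13 : x1 0 i3 = 0 by rewrite /x1; vc; rewrite u3 u6; ring.
have f16 : x1 0 i6 = 0 by rewrite /x1; vc; rewrite u3 u6; ring.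
have [c2 [s2 [h2 [z2 _]]]] := givens (x1 0 i4) (x1 0 i5).
set x2 := x1 *m gB c2 (- s2).
have f21 : x2 0 i1 = 0 by rewrite /x2; vc; rewrite f11; ring.
have f22 : x2 0 i2 = 0 by rewrite /x2; vc; rewrite f12; ring.
have f23 : x2 0 i3 = 0 by rewrite /x2; vc; rewrite f13 f16; ring.
have f25 : x2 0 i5 = 0 by rewrite /x2; vc; lra.
have f26 : x2 0 i6 = 0 by rewrite /x2; vc; rewrite f13 f16; ring.
have [c3 [s3 [h3 [z3 p3]]]] := givens (x2 0 i0) (x2 0 i4).
set x3 := x2 *m gG c3 (- s3).
have hs : forall s : R, (- s) ^+ 2 = s ^+ 2 by move=> s; ring.
have hG : G2grp (gF c1 (- s1) *m gB c2 (- s2) *m gG c3 (- s3)).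
  apply: G2grp_mul; last by apply: gG_G2; rewrite hs.
  by apply: G2grp_mul; [apply: gF_G2 | apply: gB_G2]; rewrite hs.
exists (gF c1 (- s1) *m gB c2 (- s2) *m gG c3 (- s3)); split => //.
split; first by rewrite !mulmxA eF3 eB3 eG3.
split.
  have hd := dot_G2 u hG; rewrite hu !mulmxA -/x1 -/x2 -/x3 in hd.
  have g1 : x3 0 i1 = 0 by rewrite /x3; vc; rewrite f21 f25; ring.
  have g2 : x3 0 i2 = 0 by rewrite /x3; vc; rewrite f22; ring.
  have g3 : x3 0 i3 = 0 by rewrite /x3; vc; rewrite f23; ring.
  have g4 : x3 0 i4 = 0 by rewrite /x3; vc; lra.
  have g5 : x3 0 i5 = 0 by rewrite /x3; vc; rewrite f21 f25; ring.
  have g6 : x3 0 i6 = 0 by rewrite /x3; vc; rewrite f26; ring.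
  have g0e : x3 0 i0 = c3 * x2 0 i0 + s3 * x2 0 i4 by rewrite /x3; vc; rewrite f21 f25; ring.
  have g0p : 0 <= x3 0 i0 by rewrite g0e p3 sqrtr_ge0.
  have g0 : x3 0 i0 = 1 by rewrite dot7E g1 g2 g3 g4 g5 g6 in hd; nra.
  rewrite !mulmxA -/x1 -/x2 -/x3.
  by vcase; rewrite e_E /= ?g0 ?g1 ?g2 ?g3 ?g4 ?g5 ?g6.
rewrite !trmx_mul gG_tr gB_tr gF_tr !mulmxA.
have y0 : e i3 *m gG c3 (- - s3) = e i3 by vcase; rewrite mulrotE !e_E /rotf /=; ring.
rewrite y0.
set y1 := e i3 *m gB c2 (- - s2).
have k0 : y1 0 i0 = 0 by rewrite /y1; vc; rewrite !e_E /=; ring.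
have k1 : y1 0 i1 = 0 by rewrite /y1; vc; rewrite !e_E /=; ring.
have k2 : y1 0 i2 = 0 by rewrite /y1; vc; rewrite !e_E /=; ring.
have k4 : y1 0 i4 = 0 by rewrite /y1; vc; rewrite !e_E /=; ring.
have k5 : y1 0 i5 = 0 by rewrite /y1; vc; rewrite !e_E /=; ring.
split; rewrite /= mulrotE /rotf /= ?k0 ?k1 ?k2 ?k4 ?k5; ring.
Qed.

Lemma span47 N (b : R) y : in_g2 N -> e i2 *m N = 0 -> e i3 *m N = b *: e i6 ->
  y 0 i0 = 0 -> y 0 i1 = 0 -> y 0 i2 = 0 -> y 0 i4 = 0 -> y 0 i5 = 0 ->
  y *m N = b *: cross7 (e i2) y.
Proof.
move=> hN e3N e4N h0 h1 h2 h4 h5; have [E1 E6 E4] := g2_rels hN e3N.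
have r3 : forall c, N i3 c = b * e i6 0 c by move=> c; rewrite -rowN e4N vscaleE.
have r6 : forall c, N i6 c = - (b * e i3 0 c).
  by apply: ord7_cases; rewrite E6 crossE /crossf /= !e_E !rowN !r3 !e_E /=; ring.
vcase; rewrite mulE vscaleE crossE /crossf /= h0 h1 h2 h4 h5 !r3 !r6 !e_E /=; ring.
Qed.
Definition tmf (p q : R) (i j : nat) : R :=
  match i, j with
  | 0%N, 1%N => p | 1%N, 0%N => - p | 3%N, 6%N => q | 6%N, 3%N => - q
  | 4%N, 5%N => p + q | 5%N, 4%N => - (p + q) | _, _ => 0 end.

Definition Tm (p q : R) : 'M[R]_7 := \matrix_(i, j) tmf p q i j.

Lemma TmE p q i j : Tm p q i j = tmf p q i j. Proof. by rewrite mxE. Qed.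

Lemma to_T N (p q : R) : in_g2 N -> e i2 *m N = 0 -> e i0 *m N = p *: e i1 ->
  e i3 *m N = q *: e i6 -> N = Tm p q.
Proof.
move=> hN e3N e1N e4N; have [E1 E6 E4] := g2_rels hN e3N.
have [_ dN] := hN.
have r0 : forall c, N i0 c = p * e i1 0 c by move=> c; rewrite -rowN e1N vscaleE.
have r3 : forall c, N i3 c = q * e i6 0 c by move=> c; rewrite -rowN e4N vscaleE.
have r2 : forall c, N i2 c = 0 by move=> c; rewrite -rowN e3N v0E.
have r1 : forall c, N i1 c = - (p * e i0 0 c).
  by apply: ord7_cases; rewrite E1 crossE /crossf /= !e_E !rowN !r0 !e_E /=; ring.
have r6 : forall c, N i6 c = - (q * e i3 0 c).
  by apply: ord7_cases; rewrite E6 crossE /crossf /= !e_E !rowN !r3 !e_E /=; ring.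
have c03 : cross7 (e i0) (e i3) = e i4 by vcase; rewrite crossE /crossf /= !e_E /=; ring.
have c13 : cross7 (e i1) (e i3) = e i5 by vcase; rewrite crossE /crossf /= !e_E /=; ring.
have r4 : forall c, N i4 c = (p + q) * e i5 0 c.
  move=> c; rewrite -rowN -c03 dN e1N e4N; move: c.
  by apply: ord7_cases; rewrite vaddE !crossE /crossf /= !vscaleE !e_E /=; ring.
have r5 : forall c, N i5 c = - ((p + q) * e i4 0 c).
  move=> c; rewrite -rowN -c13 dN e4N; move: c.
  by apply: ord7_cases; rewrite vaddE !crossE /crossf /= !vscaleE !e_E !rowN !r1 !e_E /=; ring.
mcase; rewrite TmE /tmf /= ?r0 ?r1 ?r2 ?r3 ?r4 ?r5 ?r6 ?e_E /=; ring.
Qed.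

Lemma conjRT i j a b sg c s (p q : R) k l :
  (rot i j a b sg c s *m Tm p q *m (rot i j a b sg c s)^T) k l =
  \sum_(m < 7) \sum_(n < 7) rotf i j a b sg c s k m * tmf p q m n * rotf i j a b sg c s l n.
Proof.
rewrite mxE exchange_big /=; apply: eq_bigr => n _; rewrite mxE big_distrl /=.
by apply: eq_bigr => m _; rewrite !mxE.
Qed.

Lemma mulRTE i j a b sg c s (p q : R) k l :
  (rot i j a b sg c s *m Tm p q) k l = \sum_(m < 7) rotf i j a b sg c s k m * tmf p q m l.
Proof. by rewrite mxE; apply: eq_bigr => m _; rewrite !mxE. Qed.
Lemma mulTRE i j a b sg c s (p q : R) k l :
  (Tm p q *m rot i j a b sg c s) k l = \sum_(m < 7) tmf p q k m * rotf i j a b sg c s m l.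
Proof. by rewrite mxE; apply: eq_bigr => m _; rewrite !mxE. Qed.

Lemma weyl_gen W (p q p' q' : R) : G2grp W -> W *m Tm p q = Tm p' q' *m W ->
  reach (Tm p q) (Tm p' q').
Proof.
move=> hW e1; exists W; split => //; have [og _] := hW.
by rewrite e1 -mulmxA og mulmx1.
Qed.

Ltac weyl := mcase; rewrite mulRTE mulTRE !sum7 /rotf /tmf /=; ring.

Lemma weylC (p q : R) : reach (Tm p q) (Tm q p).
Proof. apply: (weyl_gen (W := gC 0 1)); first by apply: gC_G2; ring. weyl. Qed.
Lemma weylD (p q : R) : reach (Tm p q) (Tm p (- (p + q))).
Proof. apply: (weyl_gen (W := gD 0 1)); first by apply: gD_G2; ring. weyl. Qed.
Lemma weylG (p q : R) : reach (Tm p q) (Tm (- (p + q)) q).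
Proof. apply: (weyl_gen (W := gG 0 1)); first by apply: gG_G2; ring. weyl. Qed.
Lemma weylE (p q : R) : reach (Tm p q) (Tm (- p) (- q)).
Proof. apply: (weyl_gen (W := gE (-1) 0)); first by apply: gE_G2; ring. weyl. Qed.
Lemma weyl_normalize (p q : R) : exists p' q', reach (Tm p q) (Tm p' q') /\
  p' <= - (p' + q') /\ - (p' + q') <= q' /\ 0 <= - (p' + q').
Proof.
have [p1 [q1 [h1 o1]]] : exists p1 q1, reach (Tm p q) (Tm p1 q1) /\ p1 <= q1.
  case: (lerP p q) => h; first by exists p, q; split => //; exact: reach_refl.
  by exists q, p; split; [exact: weylC | lra].
have [p2 [q2 [h2 [o2 o2']]]] : exists p2 q2, reach (Tm p q) (Tm p2 q2) /\ p2 <= q2 /\ p2 <= - (p2 + q2).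
  case: (lerP p1 (- (p1 + q1))) => h; first by exists p1, q1.
  exists (- (p1 + q1)), q1; split; first exact: reach_trans h1 (weylG _ _).
  split; lra.
have [p3 [q3 [h3 [o3 o3']]]] : exists p3 q3, reach (Tm p q) (Tm p3 q3) /\
    p3 <= - (p3 + q3) /\ - (p3 + q3) <= q3.
  case: (lerP (- (p2 + q2)) q2) => h; first by exists p2, q2.
  exists p2, (- (p2 + q2)); split; first exact: reach_trans h2 (weylD _ _).
  split; lra.
case: (lerP 0 (- (p3 + q3))) => h; first by exists p3, q3.
exists (- q3), (- p3); split.
  by apply: reach_trans h3 _; apply: reach_trans (weylE _ _) _; exact: weylC.
split; [lra | split; lra].
Qed.

Lemma reach_conjT G M : G2grp G -> reach M (G^T *m M *m G).
Proof. by move=> hG; exists G^T; split; [exact: G2grp_tr | rewrite trmxK]. Qed.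

Lemma reduce M : in_g2 M -> exists p q, reach M (Tm p q).
Proof.
move=> hM; have [sk _] := hM.
have [v [hv vM]] := unit_ker sk.
have [G [hG vG]] := to_e3 hv.
set N1 := G^T *m M *m G.
have r1 : reach M N1 := reach_conjT M hG.
have hN1 := reach_g2 hM r1.
have e3N1 : e i2 *m N1 = 0.
  by rewrite /N1 !mulmxA (move_back hG vG) vM !mul0mx.
have [w [b [hw [w2 wN]]]] := complex_eig hN1 e3N1.
have [H [hH [e3H wH]]] := to_e4 hw w2.
set N2 := H^T *m N1 *m H.
have r2 : reach N1 N2 := reach_conjT N1 hH.
have hN2 := reach_g2 hN1 r2.
have e3N2 : e i2 *m N2 = 0 by exact: ker_transport.
have e4N2 : e i3 *m N2 = b *: e i6.
  by have := eig_transport hH e3H wN; rewrite wH cross3_3.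
have [u [b' [hu [u2 [u3 [u6 uN]]]]]] := complex_eig2 hN2 e3N2 e4N2.
have [H' [hH' [e3H' [uH' ey]]]] := to_e1 hu u2 u3 u6.
set N3 := H'^T *m N2 *m H'.
have r3 : reach N2 N3 := reach_conjT N2 hH'.
have hN3 := reach_g2 hN2 r3.
have e3N3 : e i2 *m N3 = 0 by exact: ker_transport.
have e1N3 : e i0 *m N3 = b' *: e i1.
  by have := eig_transport hH' e3H' uN; rewrite uH' cross3_0.
have e4N3 : e i3 *m N3 = b *: e i6.
  move: ey => /=; set y := e i3 *m H'^T => [[y0 y1 y2 y4 y5]].
  have yN := span47 hN2 e3N2 e4N2 y0 y1 y2 y4 y5.
  have yH : y *m H' = e i3 by rewrite /y -mulmxA (G2grp_orth' hH') mulmx1.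
  by have := eig_transport hH' e3H' yN; rewrite yH cross3_3.
exists b', b.
rewrite -(to_T hN3 e3N3 e1N3 e4N3).
exact: reach_trans r1 (reach_trans r2 r3).
Qed.

End Work3.

Section Work4.
Variable R : rcfType.
Implicit Types (u v w x y : 'rV[R]_7) (M N G H B : 'M[R]_7).
Ltac mcase := apply: mat_ext;
  apply: ord7_cases; apply: ord7_cases.
Ltac vcase := apply: vec_ext; apply: ord7_cases.
Local Notation e k := (@e_ R k).
Notation j0 := (@Ordinal 3 0 isT).
Notation j1 := (@Ordinal 3 1 isT).
Notation j2 := (@Ordinal 3 2 isT).

Lemma fvE B k (h : (k < 7)%N) : fv B k.+1 = e (Ordinal h) *m B.
Proof.
rewrite /fv rowE /e_ /stdb; congr (delta_mx _ _ *m _); apply/val_inj; rewrite /= inordK //.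
Qed.

Lemma cross01 : cross7 (e i0) (e i1) = e i2.
Proof. vcase; rewrite crossE /crossf /= !e_E /=; ring. Qed.
Lemma cross03 : cross7 (e i0) (e i3) = e i4.
Proof. vcase; rewrite crossE /crossf /= !e_E /=; ring. Qed.
Lemma cross13 : cross7 (e i1) (e i3) = e i5.
Proof. vcase; rewrite crossE /crossf /= !e_E /=; ring. Qed.
Lemma cross23 : cross7 (e i2) (e i3) = e i6.
Proof. vcase; rewrite crossE /crossf /= !e_E /=; ring. Qed.

Lemma G2grp_adapted B : G2grp B -> G2_adapted B.
Proof.
move=> hB; have [og [dg cg]] := hB.
split.
  move=> i j; have := congr1 (fun m : 'M[R]_7 => m i j) og => /=.
  rewrite !mxE => <-; apply: eq_bigr => k _; rewrite !mxE.
  by [].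
split; first by rewrite dg ltr01.
rewrite !(fvE B (k := 0) isT) !(fvE B (k := 1) isT) !(fvE B (k := 2) isT) !(fvE B (k := 3) isT)
  !(fvE B (k := 4) isT) !(fvE B (k := 5) isT) !(fvE B (k := 6) isT).
by rewrite !cg cross01 cross03 cross13 cross23.
Qed.
Lemma sum3r (F : 'I_3 -> R) : \sum_(j < 3) F j = F j0 + F j1 + F j2.
Proof.
rewrite !big_ord_recr big_ord0 /= add0r.
by repeat congr (_ + _); congr F; apply/val_inj.
Qed.

Lemma spanE B k : [/\ span356 B j0 k = B i2 k, span356 B j1 k = B i4 k & span356 B j2 k = B i5 k].
Proof.
rewrite /span356 (fvE B (k := 2) isT) (fvE B (k := 4) isT) (fvE B (k := 5) isT).
split.
- have -> : j0 = lshift (1 + 1) (0 : 'I_1) by apply/val_inj.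
  by apply: (etrans (col_mxEu _ _ _ _)); rewrite rowN.
- have -> : j1 = rshift 1 (lshift 1 (0 : 'I_1)) by apply/val_inj.
  apply: (etrans (col_mxEd _ _ _ _)); apply: (etrans (col_mxEu _ _ _ _)); by rewrite rowN.
- have -> : j2 = rshift 1 (rshift 1 (0 : 'I_1)) by apply/val_inj.
  apply: (etrans (col_mxEd _ _ _ _)); apply: (etrans (col_mxEd _ _ _ _)); by rewrite rowN.
Qed.

Lemma span_mul B (D : 'rV[R]_3) :
  D *m span356 B = (D 0 j0 *: e i2 + D 0 j1 *: e i4 + D 0 j2 *: e i5) *m B.
Proof.
apply/rowP => k; rewrite mxE sum3r; have [a b c] := spanE B k.
by rewrite a b c mulE !vaddE !vscaleE !e_E /=; ring.
Qed.

Lemma spanP B x : (x <= span356 B)%MS <->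
  exists a b c, x = (a *: e i2 + b *: e i4 + c *: e i5) *m B.
Proof.
split.
  by move/submxP => [D ->]; rewrite span_mul; do 3 eexists.
move=> [a [b [c ->]]]; apply/submxP.
exists (\row_(j < 3) (match val j with 0%N => a | 1%N => b | _ => c end)).
by rewrite span_mul !mxE.
Qed.

Lemma spanE0 B k : span356 B j0 k = B i2 k. Proof. by have [] := spanE B k. Qed.
Lemma spanE1 B k : span356 B j1 k = B i4 k. Proof. by have [] := spanE B k. Qed.
Lemma spanE2 B k : span356 B j2 k = B i5 k. Proof. by have [] := spanE B k. Qed.

Lemma rank_span B : G2grp B -> \rank (span356 B) = 3%N.
Proof.
move=> [og _].
have e1 : span356 B *m (span356 B)^T = 1%:M.
  have h1 : forall a b, (a == b)%:R = \sum_(k < 7) B a k * B b k :> R.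
    move=> a b; have := congr1 (fun m : 'M[R]_7 => m a b) og => /=; rewrite !mxE => <-.
    by apply: eq_bigr => k _; rewrite mxE.
  have trX : forall (A : 'M[R]_(3,7)) k j, A^T k j = A j k by move=> A k j; rewrite mxE.
  have mulX : forall (A : 'M[R]_(3,7)) (C : 'M[R]_(7,3)) j j',
    (A *m C) j j' = \sum_(k < 7) A j k * C k j' by move=> A C j j'; rewrite mxE.
  have idX : forall j j' : 'I_3, (1%:M : 'M[R]_3) j j' = (j == j')%:R by move=> j j'; rewrite mxE.
  apply/matrixP => j j'; rewrite mulX idX.
  under eq_bigr => k _ do rewrite trX.
  case: j => [[|[|[|//]]]] hj; rewrite (bool_irrelevance hj isT);
  case: j' => [[|[|[|//]]]] hj'; rewrite (bool_irrelevance hj' isT);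
  under eq_bigr => k _ do rewrite ?spanE0 ?spanE1 ?spanE2;
  by rewrite -h1.
apply/eqP; rewrite eqn_leq rank_leq_row /=.
by rewrite -{1}(mxrank1 R 3) -e1 mxrankM_maxl.
Qed.
Lemma recover B M : G2grp B -> M = B^T *m (B *m M *m B^T) *m B.
Proof.
move=> hB; have og' := G2grp_orth' hB.
by rewrite !mulmxA og' mul1mx -mulmxA og' mulmx1.
Qed.

Lemma ker_iff B M N v : G2grp B -> B *m M *m B^T = N ->
  (v *m M = 0 <-> (v *m B^T) *m N = 0).
Proof.
move=> hB eN; have [og _] := hB; rewrite (recover M hB) eN !mulmxA.
split; last by move=> ->; rewrite mul0mx.
by move=> h; have := congr1 (fun m => m *m B^T) h; rewrite mul0mx -mulmxA og mulmx1.
Qed.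

Lemma TmvE (p q : R) x : x *m Tm p q =
  (- (p * x 0 i1)) *: e i0 + (p * x 0 i0) *: e i1 + (- (q * x 0 i6)) *: e i3
  + (- ((p + q) * x 0 i5)) *: e i4 + ((p + q) * x 0 i4) *: e i5 + (q * x 0 i3) *: e i6.
Proof. vcase; rewrite mulE !TmE /tmf /= !vaddE !vscaleE !e_E /=; ring. Qed.

Lemma vecE x : x = x 0 i0 *: e i0 + x 0 i1 *: e i1 + x 0 i2 *: e i2 + x 0 i3 *: e i3
  + x 0 i4 *: e i4 + x 0 i5 *: e i5 + x 0 i6 *: e i6.
Proof. vcase; rewrite !vaddE !vscaleE !e_E /=; ring. Qed.

Lemma coordE x k : x = 0 -> x 0 k = 0. Proof. by move=> ->; rewrite v0E. Qed.

Lemma fv_ne0 B : G2grp B -> fv B 3 != 0.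
Proof.
move=> hB; have [hd _] := G2grp_adapted hB.
have := hd (inord 2) (inord 2); rewrite eqxx /dot7 => h.
apply/eqP => e0; move: h; rewrite /fv in e0; rewrite e0 big1 => [|k _]; last by rewrite v0E mulr0.
by move/eqP; rewrite eq_sym oner_eq0.
Qed.

Lemma mul_eq0r (a b : R) : a != 0 -> a * b = 0 -> b = 0.
Proof. by move=> ha /eqP; rewrite mulf_eq0 (negbTE ha) => /eqP. Qed.

Lemma ker_iii B M (p q : R) : G2grp B -> B *m M *m B^T = Tm p q ->
  p != 0 -> q != 0 -> p + q != 0 ->
  \rank M = 6%N /\ (kermx M == fv B 3)%MS.
Proof.
move=> hB eN hp hq hpq; have [og _] := hB; have og' := G2grp_orth' hB.
have fv3 : fv B 3 = e i2 *m B by rewrite (fvE B (k := 2) isT).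
have kerP : forall v, v *m M = 0 <-> exists a, v = a *: fv B 3.
  move=> v; rewrite (ker_iff v hB eN); split.
    set x := v *m B^T; rewrite TmvE => h.
    have cE : forall k, (- (p * x 0 i1) *: e i0 + p * x 0 i0 *: e i1 + - (q * x 0 i6) *: e i3
      + - ((p + q) * x 0 i5) *: e i4 + (p + q) * x 0 i4 *: e i5 + q * x 0 i3 *: e i6) 0 k = 0.
      by move=> k; rewrite h v0E.
    have x0 : x 0 i0 = 0.
      by apply: (mul_eq0r hp); have := cE i1; rewrite !vaddE !vscaleE !e_E /= => H; rewrite -H; ring.
    have x1 : x 0 i1 = 0.
      by apply: (mul_eq0r hp); have := cE i0; rewrite !vaddE !vscaleE !e_E /= => H; apply/eqP; rewrite -oppr_eq0; apply/eqP; rewrite -H; ring.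
    have x3 : x 0 i3 = 0.
      by apply: (mul_eq0r hq); have := cE i6; rewrite !vaddE !vscaleE !e_E /= => H; rewrite -H; ring.
    have x6 : x 0 i6 = 0.
      by apply: (mul_eq0r hq); have := cE i3; rewrite !vaddE !vscaleE !e_E /= => H; apply/eqP; rewrite -oppr_eq0; apply/eqP; rewrite -H; ring.
    have x4 : x 0 i4 = 0.
      by apply: (mul_eq0r hpq); have := cE i5; rewrite !vaddE !vscaleE !e_E /= => H; rewrite -H; ring.
    have x5 : x 0 i5 = 0.
      by apply: (mul_eq0r hpq); have := cE i4; rewrite !vaddE !vscaleE !e_E /= => H; apply/eqP; rewrite -oppr_eq0; apply/eqP; rewrite -H; ring.
    exists (x 0 i2); rewrite fv3 scalemxAl.
    have -> : v = x *m B by rewrite /x -mulmxA og' mulmx1.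
    congr (_ *m _); rewrite [LHS]vecE x0 x1 x3 x4 x5 x6 !scale0r !addr0 !add0r //.
  move=> [a ->]; rewrite fv3 -scalemxAl -mulmxA og mulmx1 TmvE.
  by vcase; rewrite !vaddE !vscaleE !e_E !v0E /=; ring.
have hk : (kermx M == fv B 3)%MS.
  apply/andP; split.
    apply/rV_subP => v /sub_kermxP vM; have [a ->] := (kerP v).1 vM.
    by apply/submxP; exists a%:M; rewrite mul_scalar_mx.
  by apply/sub_kermxP; apply/(kerP _).2; exists 1; rewrite scale1r.
split => //.
have := mxrank_ker M; rewrite (eqmx_rank hk) rank_rV (fv_ne0 hB) /=.
have := rank_leq_row M; lia.
Qed.
Lemma cross_span (a b c a' b' c' : R) :
  cross7 (a *: e i2 + b *: e i4 + c *: e i5) (a' *: e i2 + b' *: e i4 + c' *: e i5) =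
  (- (b * c' - c * b')) *: e i2 + (a * c' - c * a') *: e i4 + (- (a * b' - b * a')) *: e i5.
Proof. vcase; rewrite !crossE /crossf /= !vaddE !vscaleE !e_E /=; ring. Qed.

Lemma ker_ii B M (p q : R) : G2grp B -> B *m M *m B^T = Tm p q ->
  p != 0 -> q != 0 -> p + q = 0 ->
  \rank M = 4%N /\ (kermx M == span356 B)%MS /\ associative_plane (span356 B).
Proof.
move=> hB eN hp hq hpq; have [og [_ cg]] := hB; have og' := G2grp_orth' hB.
have kerP : forall v, v *m M = 0 <-> (v <= span356 B)%MS.
  move=> v; rewrite (ker_iff v hB eN) spanP; split.
    set x := v *m B^T; rewrite TmvE => h.
    have cE : forall k, (- (p * x 0 i1) *: e i0 + p * x 0 i0 *: e i1 + - (q * x 0 i6) *: e i3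
      + - ((p + q) * x 0 i5) *: e i4 + (p + q) * x 0 i4 *: e i5 + q * x 0 i3 *: e i6) 0 k = 0.
      by move=> k; rewrite h v0E.
    have x0 : x 0 i0 = 0.
      by apply: (mul_eq0r hp); have := cE i1; rewrite !vaddE !vscaleE !e_E /= => H; rewrite -H; ring.
    have x1 : x 0 i1 = 0.
      by apply: (mul_eq0r hp); have := cE i0; rewrite !vaddE !vscaleE !e_E /= => H;
        apply/eqP; rewrite -oppr_eq0; apply/eqP; rewrite -H; ring.
    have x3 : x 0 i3 = 0.
      by apply: (mul_eq0r hq); have := cE i6; rewrite !vaddE !vscaleE !e_E /= => H; rewrite -H; ring.
    have x6 : x 0 i6 = 0.
      by apply: (mul_eq0r hq); have := cE i3; rewrite !vaddE !vscaleE !e_E /= => H;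
        apply/eqP; rewrite -oppr_eq0; apply/eqP; rewrite -H; ring.
    exists (x 0 i2), (x 0 i4), (x 0 i5).
    have -> : v = x *m B by rewrite /x -mulmxA og' mulmx1.
    congr (_ *m _); rewrite [LHS]vecE x0 x1 x3 x6 !scale0r !addr0 !add0r //.
  move=> [a [b [c ->]]]; rewrite -[_ *m B *m B^T]mulmxA og mulmx1 TmvE.
  by vcase; rewrite !vaddE !vscaleE !e_E !v0E /=; rewrite -[p + q]/(p + q) hpq; ring.
have hk : (kermx M == span356 B)%MS.
  apply/andP; split.
    by apply/rV_subP => v /sub_kermxP vM; apply/(kerP v).1.
  apply/row_subP => j; apply/sub_kermxP; apply/(kerP _).2; exact: row_sub.
have hr := rank_span hB.
split.
  have := mxrank_ker M; rewrite (eqmx_rank hk) hr.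
  have := rank_leq_row M; lia.
split => //; split => // u w /spanP [a [b [c ->]]] /spanP [a' [b' [c' ->]]].
by apply/spanP; rewrite cg cross_span; do 3 eexists.
Qed.

End Work4.


Theorem theorem3p5 (R : rcfType) (M : 'M[R]_7) (HX : in_g2 M) :
  exists (B : 'M[R]_7) (l m : R),
    G2_adapted B /\ m <= l /\ 0 <= m /\
    mx_in_frame M B = g2_normal_form l m /\
    (l = m \/ (0 < l /\ m = 0) \/ (m < l /\ 0 < m)) /\
    (l = m -> l = 0 /\ m = 0 /\ M = 0) /\
    (0 < l -> m = 0 ->
       \rank M = 4%N /\ (kermx M == span356 B)%MS /\
       associative_plane (span356 B)) /\
    (m < l -> 0 < m ->
       \rank M = 6%N /\ (kermx M == fv B 3)%MS).
Proof.
have [p [q hr]] := reduce HX.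
have [p' [q' [hr' [o1 [o2 o3]]]]] := weyl_normalize p q.
have [B [hB eB]] := reach_trans hr hr'.
exists B, (- p'), (- (p' + q')).
have hnf : mx_in_frame M B = g2_normal_form (- p') (- (p' + q')).
  rewrite /mx_in_frame -eB; apply: mat_ext; apply: ord7_cases; apply: ord7_cases;
  by rewrite TmE mxE /tmf /=; ring.
split; first exact: G2grp_adapted hB.
split; first lra.
split; first lra.
split; first exact: hnf.
split.
  have [hm|hm] := eqVneq (- (p' + q')) 0.
    have [hl|hl] := eqVneq (- p') (- (p' + q')); first by left.
    by right; left; split => //; rewrite lt_def; apply/andP; split; [apply/eqP => h; move/eqP: hl; apply; lra | lra].
  have [hl|hl] := eqVneq (- p') (- (p' + q')); first by left.
  right; right; split.
    by rewrite lt_def; apply/andP; split; [apply/eqP => h; move/eqP: hl; apply; lra | lra].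
  by rewrite lt_def; apply/andP; split; [apply/eqP => h; move/eqP: hm; apply; lra | lra].
split.
  move=> hlm; have hq : q' = 0 by lra.
  have hm0 : - (p' + q') = 0 by lra.
  have hp0 : p' = 0 by lra.
  split; first by rewrite hp0 oppr0.
  split => //.
  rewrite (recover M hB) -eB hp0 hq.
  have -> : Tm 0 0 = 0 :> 'M[R]_7.
    by apply: mat_ext; apply: ord7_cases; apply: ord7_cases; rewrite TmE mxE /tmf /=; ring.
  by rewrite mulmx0 mul0mx.
split.
  move=> hl hm.
  have hp : p' != 0 by apply/negP => /eqP h0; lra.
  have hq : q' != 0 by apply/negP => /eqP h0; lra.
  have hpq : p' + q' = 0 by lra.
  exact: (ker_ii hB (esym eB) hp hq hpq).
move=> hl hm.
have hp : p' != 0 by apply/negP => /eqP h0; lra.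
have hq : q' != 0 by apply/negP => /eqP h0; lra.
have hpq : p' + q' != 0 by apply/negP => /eqP h0; lra.
exact: (ker_iii hB (esym eB) hp hq hpq).
Qed.
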